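(* Let $\alpha:X\to\mathbb PLX$ be measurable, let $t_a(x)\in\mathbb DX$ be $t_a(x)(S)=\alpha(x)(\{a\}\times S)$, and let $[\![-]\!]:\mathbb DX\to\mathbb DA^\infty$ be the unique $F$-coalgebra morphism from $\tilde\alpha^\#$ to $\Pi$ (with $\tilde\alpha^\#$ as below). Let $\mathbf{tr}:X\to\mathbb PA^\infty$ be any map such that for all $x\in X$, $a\in A$, $w\in A^*$: $$\mathbf{tr}(x)(A^\infty)=\alpha(x)(LX),\quad \mathbf{tr}(x)(\{\varepsilon\})=\alpha(x)(1),$$ $$\mathbf{tr}(x)(awA^\infty)=\int_X\mathbf{tr}(-)(wA^\infty)\,dt_a(x),\quad \mathbf{tr}(x)(\{aw\})=\int_X\mathbf{tr}(-)(\{w\})\,dt_a(x).$$ Then $[\![\eta_X(x)]\!]=\mathbf{tr}(x)$ for every $x\in X$, i.e. $\iota_{A^\infty}\circ\mathbf{tr}=[\![-]\!]\circ\eta_X$.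
   Context: Work in $\mathbf{Meas}$. $\mathbb I=[0,1]$; $A$ finite alphabet; $1=\{*\}$; $LX=A\times X+1$ with $\sigma$-algebra $(\mathcal P(A)\otimes\Sigma_X)\oplus\mathcal P(1)$. $\mathbb DX$ (resp. $\mathbb PX$) is the set of sub-probability (resp. probability) measures on $X$ with the $\sigma$-algebra generated by $m\mapsto m(S)$; $\iota_X:\mathbb PX\to\mathbb DX$ is the inclusion; $\eta_X(x)$ is the Dirac measure at $x$. $A^\infty=A^*\cup A^\omega$ with $\sigma$-algebra generated by $\{\emptyset\}\cup\{\{w\}\mid w\in A^*\}\cup\{wA^\infty\mid w\in A^*\}$. $F$ is the functor $FX=\mathbb I\times\mathbb I\times X^A$, $Ff=\mathrm{id}\times\mathrm{id}\times f^A$. $\Pi(m)=\langle m(A^\infty),m(\{\varepsilon\}),a\mapsto m_a\rangle$ with $m_a(S)=m(aS)$. The determinized coalgebra $\tilde\alpha^\#=\langle\tilde\alpha^\#_1,\tilde\alpha^\#_*,a\mapsto\tau_a\rangle:\mathbb DX\to F\mathbb DX$ is $\tilde\alpha^\#_1(m)=\int_X\alpha(-)(LX)\,dm$, $\tilde\alpha^\#_*(m)=\int_X\alpha(-)(1)\,dm$, $\tau_a(m)(S)=\int_X\alpha(-)(\{a\}\times S)\,dm$; it satisfies $\tilde\alpha^\#_1=\tilde\alpha^\#_*+\sum_a\tilde\alpha^\#_1\circ\tau_a$, which guarantees existence and uniqueness of a measurable $[\![-]\!]$ with $\Pi\circ[\![-]\!]=F[\![-]\!]\circ\tilde\alpha^\#$.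 *)

(* Defs.v *)
From HB Require Import structures.
From mathcomp Require Import all_boot all_order all_algebra.
From mathcomp Require Import all_classical all_reals all_analysis giry.
Set Implicit Arguments. Unset Strict Implicit. Unset Printing Implicit Defensive.
Import Order.TTheory GRing.Theory Num.Theory.
Local Open Scope classical_set_scope.

(* L X = A x X + 1, encoded as option (A * X): Some (a,x) is the       *)
(* left summand, None is the point * of 1.                             *)
Definition LX (A : finType) (X : Type) : Type := option (A * X).

Section LX_measurable.
Context (A : finType) d (X : measurableType d).

(* the product sigma-algebra P(A) (x) Sigma_X on A * X: generated by   *)
(* measurable rectangles SA `*` B (every SA is measurable in P(A))     *)
Definition AX_rect : set (set (A * X)) :=
  [set R | exists (SA : set A) (B : set X), measurable B /\ R = SA `*` B].

(* S is measurable iff its restriction to A * X is (no condition on 1) *)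
Definition LX_measurable : set (set (LX A X)) :=
  [set S | <<s AX_rect >> (Some @^-1` S)].

Lemma LX_measurable0 : LX_measurable set0.
Proof. by rewrite /LX_measurable /= preimage_set0; exact: sigma_algebra0. Qed.

Lemma LX_measurableC (S : set (LX A X)) :
  LX_measurable S -> LX_measurable (~` S).
Proof.
rewrite /LX_measurable /= preimage_setC => h.
by rewrite -setTD; exact: sigma_algebraCD.
Qed.

Lemma LX_measurableU (F : (set (LX A X))^nat) :
  (forall i, LX_measurable (F i)) -> LX_measurable (\bigcup_i F i).
Proof.
by move=> h; rewrite /LX_measurable /= preimage_bigcup; exact: sigma_algebra_bigcup.
Qed.

HB.instance Definition _ := gen_eqMixin (LX A X).
HB.instance Definition _ := gen_choiceMixin (LX A X).
HB.instance Definition _ := isPointed.Build (LX A X) None.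
HB.instance Definition _ := @isMeasurable.Build default_measure_display (LX A X)
  LX_measurable LX_measurable0 LX_measurableC LX_measurableU.

End LX_measurable.

Inductive word (A : Type) : Type :=
| Fin of seq A
| Inf of (nat -> A).

Definition eps {A : Type} : word A := Fin [::].

Definition wcons {A : Type} (a : A) (u : word A) : word A :=
  match u with
  | Fin s => Fin (a :: s)
  | Inf f => Inf (fun n => if n is k.+1 then f k else a)
  end.

Definition wprefix {A : Type} (w : seq A) (u : word A) : Prop :=
  match u with
  | Fin s => exists v, s = w ++ v
  | Inf f => forall i (x0 : A), (i < size w)%N -> f i = nth x0 w i
  end.

Definition cyl {A : Type} (w : seq A) : set (word A) := [set u | wprefix w u].

Definition Ainf (A : finType) : Type := word A.

Section Ainf_measurable.
Context (A : finType).

Definition Ainf_gen : set (set (Ainf A)) :=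
  [set S | S = set0 \/ (exists w, S = [set Fin w]) \/ (exists w, S = cyl w)].

Definition Ainf_measurable : set (set (Ainf A)) := <<s Ainf_gen >>.

Lemma Ainf_measurableC (S : set (Ainf A)) :
  Ainf_measurable S -> Ainf_measurable (~` S).
Proof. by move=> h; rewrite -setTD; exact: sigma_algebraCD. Qed.

HB.instance Definition _ := gen_eqMixin (Ainf A).
HB.instance Definition _ := gen_choiceMixin (Ainf A).
HB.instance Definition _ := isPointed.Build (Ainf A) eps.
HB.instance Definition _ := @isMeasurable.Build default_measure_display (Ainf A)
  Ainf_measurable (@sigma_algebra0 _ setT Ainf_gen) Ainf_measurableC
  (@sigma_algebra_bigcup _ setT Ainf_gen).

End Ainf_measurable.

Definition t_ {A : finType} d {X : measurableType d} {R : realType}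
  (alpha : X -> probability (LX A X) R) (a : A) (x : X) : set X -> \bar R :=
  fun S => alpha x (Some @` ([set a] `*` S)).

(* Main.v *)
Require Import Defs.
From HB Require Import structures.
From mathcomp Require Import all_boot all_order all_algebra.
From mathcomp Require Import all_classical all_reals all_analysis giry.
Import Order.TTheory GRing.Theory Num.Theory.
Local Open Scope classical_set_scope.
Local Open Scope ereal_scope.
From mathcomp Require Import measurable_realfun.

Set Implicit Arguments. Unset Strict Implicit. Unset Printing Implicit Defensive.

Section tker.
Context (R : realType) (A : finType) (d : measure_display) (X : measurableType d)
  (alpha : X -> probability (LX A X) R) (a : A) (y : X).

Lemma mE (S : set X) : measurable S -> measurable (Some @` ([set a] `*` S) : set (LX A X)).
Proof.
move=> mS; rewrite /measurable /= /LX_measurable /=.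
have -> : Some @^-1` (Some @` ([set a] `*` S)) = [set a] `*` S.
  by apply/seteqP; split=> [u [v Pv [<-]]|u Pu] //; exists u.
by apply: sub_sigma_algebra; exists [set a], S.
Qed.

Let t0 : t_ alpha a y set0 = 0.
Proof. by rewrite /t_ setX0 image_set0 measure0. Qed.

Let tge0 S : 0 <= t_ alpha a y S.
Proof. exact: measure_ge0. Qed.

Let tsa : semi_sigma_additive (t_ alpha a y).
Proof.
move=> F mF tF mU; rewrite /t_ setX_bigcupr image_bigcup.
apply: (@measure_semi_sigma_additive _ _ _ (alpha y) (fun n => Some @` ([set a] `*` F n))).
- by move=> n; exact: mE.
- move=> i j _ _ [z [[[b u] [_ Fiu] <-] [[b' u'] [_ Fju'] e]]].
  case: e => _ eu; apply: tF => //; exists u; split => //; by rewrite -eu.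
- rewrite -image_bigcup -setX_bigcupr. exact: mE.
Qed.

HB.instance Definition _ := isMeasure.Build _ _ _ (t_ alpha a y) t0 tge0 tsa.

Let t1 : t_ alpha a y setT <= 1.
Proof.
apply: (le_trans _ (probability_le1 (alpha y) measurableT)).
by apply: le_measure; rewrite ?inE//; exact: mE.
Qed.

HB.instance Definition _ := Measure_isSubProbability.Build _ _ _ (t_ alpha a y) t1.

End tker.

Lemma comp_ev (R : realType) d1 (T : measurableType d1) d2 (U : measurableType d2)
  (g : T -> giry U R) (mg : measurable_fun setT g) (E : set U) (mE : measurable E) :
  measurable_fun [set: T] ((giry_ev ^~ E) \o g).
Proof.
move=> _ Y mY; rewrite setTI.
have := measurable_giry_ev (R := R) mE measurableT mY; rewrite setTI => hY.
by have := mg measurableT _ hY; rewrite setTI.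
Qed.

Lemma comp_int (R : realType) d1 (T : measurableType d1) d2 (U : measurableType d2)
  (g : T -> giry U R) (mg : measurable_fun setT g) (f : U -> \bar R)
  (mf : measurable_fun setT f) (f0 : forall x, 0 <= f x) :
  measurable_fun [set: T] ((giry_int ^~ f) \o g).
Proof.
move=> _ Y mY; rewrite setTI.
have := measurable_giry_int mf f0 measurableT mY; rewrite setTI => hY.
by have := mg measurableT _ hY; rewrite setTI.
Qed.

Section words.
Context (A : finType).

Lemma cyl_nil : cyl [::] = [set: Ainf A].
Proof. by apply/seteqP; split => // -[s|f] _ //=; exists s. Qed.

Lemma cyl_cons (a : A) (w : seq A) : cyl (a :: w) = wcons a @` cyl w.
Proof.
apply/seteqP; split.
- case=> [s|f] /=.
    by move=> [v ->]; exists (Fin (w ++ v)) => //; exists v.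
  move=> h; exists (Inf (fun n => f n.+1)).
    by move=> i x0 hi /=; rewrite (h i.+1 x0).
  congr Inf; apply/funext => -[|n] //=.
  by rewrite (h 0%N a).
- move=> _ [[s|f] /= h <-] /=.
    by case: h => v ->; exists v.
  by move=> [|i] x0 //= hi; rewrite (h i x0).
Qed.

Lemma pfx_take (u : Ainf A) (w v : seq A) : cyl w u -> cyl v u ->
  (size w <= size v)%N -> take (size w) v = w.
Proof.
case: u => [s|f] /=.
  move=> [r1 e1] [r2 e2] hs.
  by rewrite -(takel_cat r2 hs) -e2 e1 take_size_cat.
move=> h1 h2 hs.
case: w h1 hs => [|b w'] h1 hs; first by rewrite take0.
apply: (@eq_from_nth _ b); first by rewrite size_takel.
move=> i; rewrite size_takel // => hi.
rewrite nth_take // -(h1 i b hi) (h2 i b) //.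
exact: leq_trans hi hs.
Qed.

Lemma take_cyl (w v : seq A) : take (size w) v = w -> cyl v `<=` cyl w.
Proof.
move=> e [s|f] /=.
  by move=> [r ->]; exists (drop (size w) v ++ r); rewrite catA -{1}e cat_take_drop.
move=> h i x0 hi.
have hv : (i < size v)%N.
  by apply: (leq_trans hi); rewrite -{1}e size_take_min geq_minr.
by rewrite (h i x0 hv) -[in RHS]e nth_take.
Qed.

Lemma Ainf_setI : setI_closed (@Ainf_gen A).
Proof.
have Fcyl : forall w v : seq A, @Ainf_gen A ([set Fin w] `&` cyl v).
  move=> w v; have [h|h] := pselect (cyl v (Fin w)).
    by right; left; exists w; apply/seteqP; split => [u []//|u ->]; split.
  by left; apply/seteqP; split => // u [-> ].
move=> S T [->|[[w ->]|[w ->]]] [->|[[v ->]|[v ->]]].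
- by left; rewrite set0I.
- by left; rewrite set0I.
- by left; rewrite set0I.
- by left; rewrite setI0.
- have [<-|ne] := eqVneq w v; first by right; left; exists w; rewrite setIid.
  by left; apply/seteqP; split => // u [-> [e]]; move: ne; rewrite e eqxx.
- exact: Fcyl.
- by left; rewrite setI0.
- by rewrite setIC; exact: Fcyl.
- have [[u [hw hv]]|h] := pselect (exists u, cyl w u /\ cyl v u); last first.
    by left; apply/seteqP; split => // u [hw hv]; apply: h; exists u.
  have [le|le] := leqP (size w) (size v).
    right; right; exists v; apply/seteqP; split => [u' []//|u' hu']; split => //.
    exact: (take_cyl (pfx_take hw hv le)).
  right; right; exists w; apply/seteqP; split => [u' []//|u' hu']; split => //.
  exact: (take_cyl (pfx_take hv hw (ltnW le))).
Qed.

End words.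

Unset Implicit Arguments. Set Strict Implicit.

Theorem mainTheorem13 (R : realType) (A : finType) (d : measure_display)
  (X : measurableType d)
  (alpha : X -> probability (LX A X) R)
  (alpha_meas : measurable_fun [set: X]
     (fun x => (alpha x : subprobability (LX A X) R) : giry (LX A X) R))
  (sem : giry X R -> giry (Ainf A) R)
  (sem_meas : measurable_fun [set: giry X R] sem)
  (* Pi o sem = F sem o alpha#, first component *)
  (sem_1 : forall m : giry X R,
     sem m [set: Ainf A] = \int[m]_y alpha y [set: LX A X])
  (* second component *)
  (sem_star : forall m : giry X R,
     sem m [set eps] = \int[m]_y alpha y [set None])
  (* third component: (sem m)_a = sem (tau_a m) *)
  (sem_a : forall (a : A) (m m' : giry X R),
     (forall S : set X, measurable S -> m' S = \int[m]_y t_ alpha a y S) ->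
     forall S : set (Ainf A), measurable S -> sem m (wcons a @` S) = sem m' S)
  (tr : X -> probability (Ainf A) R)
  (tr_1 : forall x, tr x [set: Ainf A] = alpha x [set: LX A X])
  (tr_star : forall x, tr x [set eps] = alpha x [set None])
  (tr_cyl : forall (x : X) (a : A) (w : seq A),
     tr x (cyl (a :: w)) = \int[t_ alpha a x]_y tr y (cyl w))
  (tr_sing : forall (x : X) (a : A) (w : seq A),
     tr x [set Fin (a :: w)] = \int[t_ alpha a x]_y tr y [set Fin w]) :
  forall (x : X) (S : set (Ainf A)), measurable S ->
    sem (giry_ret x : giry X R) S = tr x S.
Proof.
pose ta (a : A) (y : X) : giry X R := (t_ alpha a y : subprobability X R).
have mta : forall a, measurable_fun [set: X] (ta a).
  move=> a; apply: measurable_giry_codensity => // B mB.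
  exact: (comp_ev alpha_meas (mE a mB)).
have mNone : measurable ([set None] : set (LX A X)).
  rewrite /measurable /= /LX_measurable /=.
  have -> : Some @^-1` [set None] = set0 :> set (A * X).
    by apply/seteqP; split => // u.
  exact: sigma_algebra0.
have mtr : forall w, measurable_fun [set: X] (fun y => tr y (cyl w)) /\
                     measurable_fun [set: X] (fun y => tr y [set Fin w]).
  elim=> [|a w [IH1 IH2]].
    split.
      rewrite cyl_nil; under eq_fun do rewrite tr_1.
      exact: (comp_ev alpha_meas measurableT).
    under eq_fun do rewrite tr_star.
    exact: (comp_ev alpha_meas mNone).
  split.
    under eq_fun do rewrite tr_cyl.
    exact: (comp_int (mta a) IH1 (fun _ => measure_ge0 _ _)).
  under eq_fun do rewrite tr_sing.
  exact: (comp_int (mta a) IH2 (fun _ => measure_ge0 _ _)).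
have tau : forall (a : A) (m : giry X R), exists m' : giry X R,
   (forall S, measurable S -> m' S = \int[m]_y t_ alpha a y S) /\
   (forall f, measurable_fun setT f -> (forall x, 0 <= f x) ->
      \int[m']_z f z = \int[m]_y \int[t_ alpha a y]_z f z).
  move=> a m; exists (giry_bind m (mta a)); split; last first.
    by move=> f mf f0; exact: giry_int_bind.
  move=> S mS.
  have mh : measurable_fun [set: X] (fun x => (\1_S x : R)%:E).
    by apply/measurable_EFinP; exact: measurable_indic.
  have h0 : forall x, 0 <= (\1_S x : R)%:E.
    by move=> x; rewrite lee_fin /indic; case: (x \in S).
  have := giry_int_bind m (mta a) mh h0.
  rewrite /giry_int integral_indic // setIT => ->.
  apply: eq_integral => y _; rewrite integral_indic // setIT //.
have mcyl : forall w : seq A, measurable (cyl w : set (Ainf A)).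
  by move=> w; apply: sub_sigma_algebra; right; right; exists w.
have mFin : forall w : seq A, measurable ([set Fin w] : set (Ainf A)).
  by move=> w; apply: sub_sigma_algebra; right; left; exists w.
have key : forall w (m : giry X R),
    sem m (cyl w) = \int[m]_y tr y (cyl w) /\
    sem m [set Fin w] = \int[m]_y tr y [set Fin w].
  elim=> [|a w IH] m.
    split.
      by rewrite cyl_nil sem_1; apply: eq_integral => y _; rewrite tr_1.
    by rewrite sem_star; apply: eq_integral => y _; rewrite tr_star.
  have [m' [hm' hint]] := tau a m.
  have [IH1 IH2] := IH m'.
  have [mt1 mt2] := mtr w.
  split.
    rewrite cyl_cons (sem_a a m m' hm' _ (mcyl w)) IH1.
    rewrite hint; [|exact: mt1|by move=> y; exact: measure_ge0].
    by apply: eq_integral => y _; rewrite -cyl_cons tr_cyl.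
  have -> : [set Fin (a :: w)] = wcons a @` [set Fin w] by rewrite image_set1.
  rewrite (sem_a a m m' hm' _ (mFin w)) IH2.
  rewrite hint; [|exact: mt2|by move=> y; exact: measure_ge0].
  by apply: eq_integral => y _; rewrite image_set1 /= tr_sing.
move=> x S mS.
apply: (measure_unique (@Ainf_gen A) (fun _ => cyl [::])) => //.
- exact: Ainf_setI.
- by move=> _; right; right; exists [::].
- by rewrite cyl_nil; apply/seteqP; split => // u _; exists 0%N.
- move=> B [->|[[w ->]|[w ->]]]; first by rewrite !measure0.
    have [_ k2] := key w (giry_ret x).
    transitivity (\int[giry_ret x]_y tr y [set Fin w]); first exact: k2.
    exact: (giry_int_ret x (mtr w).2).
  have [k1 _] := key w (giry_ret x).
  transitivity (\int[giry_ret x]_y tr y (cyl w)); first exact: k1.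
  exact: (giry_int_ret x (mtr w).1).
- move=> _; rewrite cyl_nil.
  have h := @sprobability_setT _ _ _ (sem (giry_ret x)).
  exact (le_lt_trans h (ltry _)).
Qed.
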